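(* Let $d \ge 3$ and $F \lneq F' \leq \mathrm{Sym}(\Omega)$ with $F'$ preserving each $F$-orbit in $\Omega$. Fix a vertex $v_0$ of $T_d$ and let $K(F,F')$ be the stabilizer of $v_0$ in $G(F,F')$. Then $K(F,F')$ is an ICC group, i.e. every non-trivial element of $K(F,F')$ has an infinite conjugacy class in $K(F,F')$.
   Context: $\Omega$ is a set with $|\Omega|=d$; $T_d$ is the $d$-regular tree with vertex set $V_d$ and a coloring $c$ of its edges by $\Omega$ which is bijective on the set $E(v)$ of edges at each vertex $v$; local permutations are $\sigma(g,v) = c|_{E(gv)}\circ g\circ (c|_{E(v)})^{-1}$. $G(F,F')$ is the group of automorphisms of $T_d$ whose local permutations all lie in $F'$ and all but finitely many lie in $F$. *)

(* Defs.v *)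
From mathcomp Require Import all_boot all_order all_fingroup.
Set Implicit Arguments. Unset Strict Implicit. Unset Printing Implicit Defensive.

(* Model of T_d with its legal edge colouring c by Omega = 'I_d.
   Vertices: reduced words over 'I_d (no two consecutive letters equal),
   i.e. elements of the free product of d copies of Z/2 (Cayley graph).
   The neighbour of w across the edge of colour a is  step w a  (multiply by a
   at the head of the word); the edge {w, step w a} has colour a. *)

Definition neqr (d : nat) : rel 'I_d := fun a b => a != b.

Definition vertex (d : nat) := {s : seq 'I_d | sorted (@neqr d) s}.

Definition step_seq (d : nat) (s : seq 'I_d) (a : 'I_d) : seq 'I_d :=
  match s with
  | b :: t => if b == a then t else a :: s
  | [::] => [:: a]
  end.

Lemma step_seq_sorted (d : nat) (s : seq 'I_d) (a : 'I_d) :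
  sorted (@neqr d) s -> sorted (@neqr d) (step_seq s a).
Proof.
case: s => [|b t] //= Hs.
case: eqP => [_|Hba]; first exact: (path_sorted Hs).
rewrite /= Hs andbT /neqr; apply/eqP => Hab; apply: Hba; by rewrite Hab.
Qed.

Definition step (d : nat) (v : vertex d) (a : 'I_d) : vertex d :=
  exist _ (step_seq (val v) a) (step_seq_sorted a (valP v)).

Definition adj (d : nat) (u w : vertex d) : Prop := exists a, w = step u a.

Definition is_aut (d : nat) (g : vertex d -> vertex d) : Prop :=
  bijective g /\ (forall u w, adj u w <-> adj (g u) (g w)).

(* "sigma(g,v) lies in H": the local permutation sigma(g,v) = c o g o c^{-1}
   sends the colour a of the edge {v, v.a} to the colour b of the edge
   {g v, g (v.a)}, i.e. g (v.a) = (g v).b; we require it to be (the function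
   of) some p in H. *)
Definition local_in (d : nat) (H : {set {perm 'I_d}}) (g : vertex d -> vertex d)
  (v : vertex d) : Prop :=
  exists2 p, p \in H & forall a, g (step v a) = step (g v) (p a).

Definition in_G (d : nat) (F F' : {set {perm 'I_d}}) (g : vertex d -> vertex d) : Prop :=
  [/\ is_aut g,
      (forall v, local_in F' g v) &
      exists l : seq (vertex d), forall v, v \notin l -> local_in F g v].

Definition in_K (d : nat) (F F' : {set {perm 'I_d}}) (v0 : vertex d)
  (g : vertex d -> vertex d) : Prop :=
  in_G F F' g /\ g v0 = v0.

Definition conj_of (d : nat) (P : (vertex d -> vertex d) -> Prop)
  (k g : vertex d -> vertex d) : Prop :=
  exists h, P h /\ forall x, g (h x) = h (k x).

(* a set of maps (considered up to extensional equality) is finite *)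
Definition finite_maps (d : nat) (C : (vertex d -> vertex d) -> Prop) : Prop :=
  exists l : seq (vertex d -> vertex d),
    forall g, C g -> exists i, (i < size l)%N /\ forall x, g x = nth id l i x.

Definition ICC (d : nat) (P : (vertex d -> vertex d) -> Prop) : Prop :=
  forall k, P k -> (exists x, k x <> x) -> ~ finite_maps (conj_of P k).

(* Main.v *)
Require Import Defs.
From mathcomp Require Import all_boot all_order all_fingroup.
From Stdlib Require Import Classical ClassicalEpsilon Lia.
From mathcomp Require Import zify.
Set Implicit Arguments. Unset Strict Implicit. Unset Printing Implicit Defensive.


Definition fstep (d : nat) (a : 'I_d) (acc : seq 'I_d) := step_seq acc a.
Definition rm (d : nat) (u s : seq 'I_d) := foldr (@fstep d) u s.

Lemma step_invol (d : nat) (X : seq 'I_d) a :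
  sorted (@neqr d) X -> step_seq (step_seq X a) a = X.
Proof.
case: X => [|b Y] /=; first by rewrite eqxx.
case: (eqVneq b a) => [->|hba] /= HS.
  case: Y HS => [|c Z] //= /andP[hac _].
  by rewrite eq_sym (negbTE hac).
by rewrite eqxx.
Qed.

Lemma rm_cancel (d : nat) (w Z : seq 'I_d) : rm (rev w ++ Z) w = Z.
Proof.
elim/last_ind: w Z => [|w x IH] Z //=.
by rewrite /rm foldr_rcons rev_rcons /= /fstep /= eqxx -/(rm _ _) IH.
Qed.

Lemma rm_cat (d : nat) (u s t : seq 'I_d) : rm u (s ++ t) = rm (rm u t) s.
Proof. by rewrite /rm foldr_cat. Qed.

Lemma rm_nocancel (d : nat) (z Q : seq 'I_d) b :
  sorted (@neqr d) (rcons z b) -> rm (b :: Q) z = z ++ b :: Q.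
Proof.
elim: z => [|x z IH] //= H.
have H1 : sorted (@neqr d) (rcons z b) by case: (z) H => //= y z' /andP[].
rewrite /fstep -/(rm _ _) IH //.
case: z H {IH H1} => [|y z'] /= /andP[H _]; rewrite /neqr in H;
  by rewrite eq_sym (negbTE H).
Qed.

Lemma sorted_catl (d : nat) (s t : seq 'I_d) :
  sorted (@neqr d) (s ++ t) -> sorted (@neqr d) s.
Proof.
elim: s => [|x s IH] //=.
case: s IH => [|y s] IH //= /andP[-> H]; exact: IH.
Qed.

Lemma map_step (d : nat) (p : {perm 'I_d}) s a :
  map p (step_seq s a) = step_seq (map p s) (p a).
Proof.
case: s => [|b t] //=.
rewrite (inj_eq perm_inj).
by case: ifP.
Qed.

Lemma sorted_mapp (d : nat) (p : {perm 'I_d}) s :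
  sorted (@neqr d) s -> sorted (@neqr d) (map p s).
Proof.
apply: homo_sorted => x y; rewrite /neqr (inj_eq perm_inj); by [].
Qed.

Lemma sorted_rev' (d : nat) (s : seq 'I_d) :
  sorted (@neqr d) s -> sorted (@neqr d) (rev s).
Proof.
rewrite rev_sorted; apply: sub_sorted => x y; rewrite /neqr eq_sym; by [].
Qed.

Lemma rm_sorted (d : nat) (u s : seq 'I_d) :
  sorted (@neqr d) u -> sorted (@neqr d) (rm u s).
Proof.
move=> Hu; elim: s => [|a s IH] //=; exact: step_seq_sorted.
Qed.

Lemma step_last (d : nat) (s : seq 'I_d) a x :
  step_seq s a = [::] \/ (s != [::] -> last x (step_seq s a) = last x s).
Proof.
case: s => [|b t] /=; first by right.
case: ifP => _; last by right.
case: t => [|y t]; first by left.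
by right.
Qed.

Lemma step_last2 (d : nat) (s : seq 'I_d) a x :
  (2 <= size s)%N -> last x (step_seq s a) = last x s.
Proof.
case: s => [|b [|y t]] //= _.
by case: ifP.
Qed.

Definition vroot (d : nat) : vertex d := exist _ [::] isT.
Definition rmul (d : nat) (u s : vertex d) : vertex d :=
  exist _ (rm (val u) (val s)) (rm_sorted (val s) (valP u)).
Definition revv (d : nat) (u : vertex d) : vertex d :=
  exist _ (rev (val u)) (sorted_rev' (valP u)).
Definition cp (d : nat) (g : vertex d -> vertex d) :=
  forall s a, g (step s a) = step (g s) a.

Lemma vinj (d : nat) (x y : vertex d) : val x = val y -> x = y.
Proof. exact: val_inj. Qed.

Lemma rmul_cp (d : nat) (u : vertex d) : cp (rmul u).
Proof.
move=> [s Hs] a; apply: vinj => /=.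
case: s Hs => [|b t] Hs //=.
case: (eqVneq b a) => [<-|] //=.
rewrite /fstep step_invol //; exact: rm_sorted (valP u).
Qed.

Lemma cp_fix (d : nat) (g : vertex d -> vertex d) :
  cp g -> g (vroot d) = vroot d -> forall s, g s = s.
Proof.
move=> Hg H0 [s Hs]; elim: s Hs => [|a t IH] Hs.
  by have -> : exist _ [::] Hs = vroot d by apply: vinj.
have Ht : sorted (@neqr d) t by exact: path_sorted Hs.
have -> : exist _ (a :: t) Hs = step (exist _ t Ht) a.
  apply: vinj => /=; case: t Hs Ht {IH} => [|b t] //= /andP[H _] _.
  by rewrite /neqr eq_sym in H; rewrite (negbTE H).
by rewrite Hg IH.
Qed.

Lemma cp_comp (d : nat) (f g : vertex d -> vertex d) : cp f -> cp g -> cp (fun x => f (g x)).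
Proof. by move=> Hf Hg s a; rewrite Hg Hf. Qed.

Lemma rmulK (d : nat) (u : vertex d) : cancel (rmul u) (rmul (revv u)).
Proof.
move=> s; apply: (cp_fix (cp_comp (rmul_cp _) (rmul_cp _))) => /=.
apply: vinj => /=; have := rm_cancel (val u) [::]; by rewrite cats0.
Qed.

Lemma rmulKV (d : nat) (u : vertex d) : cancel (rmul (revv u)) (rmul u).
Proof.
move=> s; apply: (cp_fix (cp_comp (rmul_cp _) (rmul_cp _))) => /=.
apply: vinj => /=.
have := rm_cancel (rev (val u)) [::]; by rewrite revK cats0.
Qed.

Lemma aut_of_local (d : nat) (g : vertex d -> vertex d) :
  bijective g -> (forall v, exists p : {perm 'I_d}, forall a, g (step v a) = step (g v) (p a)) ->
  is_aut g.
Proof.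
move=> Hb Hl; split => // u w; split.
  case=> a ->; case: (Hl u) => p Hp; exists (p a); exact: Hp.
case=> b Hb'; case: (Hl u) => p Hp; exists (p^-1 b)%g.
apply: (bij_inj Hb); by rewrite Hp permKV.
Qed.

Lemma conjG (d : nat) (F F' : {set {perm 'I_d}}) (r ri g : vertex d -> vertex d) :
  cp r -> cp ri -> cancel r ri -> cancel ri r -> in_G F F' g ->
  in_G F F' (fun x => r (g (ri x))).
Proof.
move=> Hr Hri K1 K2 [[Hb _] HF' [l Hl]].
have Hloc : forall H v, local_in H g (ri v) -> local_in H (fun x => r (g (ri x))) v.
  move=> H v [p Hp Hpa]; exists p => // a; by rewrite Hri Hpa Hr.
split.
- apply: aut_of_local.
    apply: bij_comp; first by exists ri.
    apply: bij_comp => //; by exists r.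
  move=> v; case: (HF' (ri v)) => p _ Hp; exists p => a; by rewrite Hri Hp Hr.
- move=> v; exact: Hloc.
- exists (map r l) => v Hv; apply: Hloc; apply: Hl.
  apply: contra Hv => H; by rewrite -[v]K2 map_f.
Qed.

Definition tw0 (d : nat) (c : 'I_d) (fa : 'I_d -> {perm 'I_d}) (s : seq 'I_d) :=
  map (fa (last c s)) s.
Definition tw (d : nat) (c : 'I_d) (fa : 'I_d -> {perm 'I_d}) (v : vertex d) : vertex d :=
  exist _ (tw0 c fa (val v)) (sorted_mapp _ (valP v)).
Definition twi (d : nat) (c : 'I_d) (t : {perm 'I_d}) (fa : 'I_d -> {perm 'I_d}) (v : vertex d) : vertex d :=
  exist _ (map ((fa (t^-1 (last c (val v))))^-1)%g (val v)) (sorted_mapp _ (valP v)).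
Definition hm (d : nat) (c : 'I_d) (fa : 'I_d -> {perm 'I_d}) (u : vertex d) x := rmul u (tw c fa (rmul (revv u) x)).
Definition hmi (d : nat) (c : 'I_d) (t : {perm 'I_d}) (fa : 'I_d -> {perm 'I_d}) (u : vertex d) x := rmul u (twi c t fa (rmul (revv u) x)).

Lemma last_mapne (d : nat) (f : 'I_d -> 'I_d) c s :
  s != [::] -> last c (map f s) = f (last c s).
Proof. by case: s => [|x s] //= _; rewrite last_map. Qed.

Lemma last_rev (T : Type) (x : T) s : last x (rev s) = head x s.
Proof. by case: s => [|y s] //=; rewrite rev_cons last_rcons. Qed.

Lemma vnil (d : nat) (v : vertex d) : val v = [::] -> v = vroot d.
Proof. by move=> H; apply: vinj. Qed.

Lemma twK (d : nat) (c : 'I_d) (t : {perm 'I_d}) (fa : 'I_d -> {perm 'I_d}) :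
  t c = c -> (forall x, fa x x = t x) -> cancel (tw c fa) (twi c t fa).
Proof.
move=> Htc Hfa [s Hs]; apply: vinj => /=; rewrite /tw0.
case: (eqVneq s [::]) => [->|Hne] //.
rewrite last_mapne // Hfa (permK t).
by rewrite -map_comp map_id_in // => x _ /=; rewrite permK.
Qed.

Lemma twKV (d : nat) (c : 'I_d) (t : {perm 'I_d}) (fa : 'I_d -> {perm 'I_d}) :
  t c = c -> (forall x, fa x x = t x) -> cancel (twi c t fa) (tw c fa).
Proof.
move=> Htc Hfa [s Hs]; apply: vinj => /=; rewrite /tw0.
case: (eqVneq s [::]) => [->|Hne] //.
have E : ((fa (t^-1 (last c s)))^-1)%g (last c s) = (t^-1)%g (last c s).
  apply: (@perm_inj _ (fa (t^-1 (last c s)))%g); by rewrite permKV Hfa permKV.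
rewrite last_mapne // E.
by rewrite -map_comp map_id_in // => x _ /=; rewrite permKV.
Qed.

Lemma tw_fix (d : nat) (c : 'I_d) (fa : 'I_d -> {perm 'I_d}) v :
  fa c = 1%g -> last c (val v) = c -> tw c fa v = v.
Proof.
move=> Hfc Hl; apply: vinj => /=; rewrite /tw0 Hl Hfc.
by rewrite map_id_in // => x _; rewrite perm1.
Qed.

Lemma tw_inG (d : nat) (F F' : {set {perm 'I_d}}) (c : 'I_d) (t : {perm 'I_d}) (fa : 'I_d -> {perm 'I_d}) :
  t c = c -> (forall x, fa x x = t x) -> (forall x, fa x \in F) -> t \in F' ->
  F \subset F' -> in_G F F' (tw c fa).
Proof.
move=> Htc Hfa HF HtF HFF.
have Hloc : forall v, val v != [::] -> local_in F (tw c fa) v.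
  move=> v Hv; exists (fa (last c (val v))) => // a; apply: vinj => /=.
  rewrite /tw0 -map_step.
  case: (step_last (val v) a c) => [->|H] //; by rewrite H.
have Hroot : local_in F' (tw c fa) (vroot d).
  exists t => // a; apply: vinj => /=; by rewrite /tw0 /= Hfa.
split.
- apply: aut_of_local.
    exists (twi c t fa); [exact: twK | exact: twKV].
  move=> v; case: (eqVneq (val v) [::]) => [H|H].
    rewrite (vnil H); case: Hroot => p _ Hp; by exists p.
  by case: (Hloc v H) => p _ Hp; exists p.
- move=> v; case: (eqVneq (val v) [::]) => [H|H]; first by rewrite (vnil H).
  case: (Hloc v H) => p Hp Hp'; exists p => //; exact: (subsetP HFF).
- exists [:: vroot d] => v Hv; apply: Hloc; apply: contra Hv => /eqP H.
  by rewrite (vnil H) mem_head.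
Qed.

Lemma hmK (d : nat) (c : 'I_d) (t : {perm 'I_d}) (fa : 'I_d -> {perm 'I_d}) u :
  t c = c -> (forall x, fa x x = t x) -> cancel (hm c fa u) (hmi c t fa u).
Proof.
move=> Htc Hfa x; by rewrite /hm /hmi rmulK twK // rmulKV.
Qed.

Lemma hmKV (d : nat) (c : 'I_d) (t : {perm 'I_d}) (fa : 'I_d -> {perm 'I_d}) u :
  t c = c -> (forall x, fa x x = t x) -> cancel (hmi c t fa u) (hm c fa u).
Proof.
move=> Htc Hfa x; by rewrite /hm /hmi rmulK twKV // rmulKV.
Qed.

Lemma hm_fix (d : nat) (c : 'I_d) (fa : 'I_d -> {perm 'I_d}) u x :
  fa c = 1%g -> last c (rm (rev (val u)) (val x)) = c -> hm c fa u x = x.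
Proof.
move=> Hfc Hl; rewrite /hm tw_fix //; first exact: (rmulKV u x).
Qed.

Lemma hm_inK (d : nat) (F F' : {set {perm 'I_d}}) (c : 'I_d) (t : {perm 'I_d}) (fa : 'I_d -> {perm 'I_d}) u :
  t c = c -> (forall x, fa x x = t x) -> (forall x, fa x \in F) -> t \in F' ->
  F \subset F' -> fa c = 1%g -> head c (val u) = c -> in_K F F' (vroot d) (hm c fa u).
Proof.
move=> Htc Hfa HF HtF HFF Hfc Hu; split.
  change (in_G F F' (fun x => rmul u (tw c fa (rmul (revv u) x)))).
  apply: conjG.
  - exact: rmul_cp.
  - exact: rmul_cp.
  - exact: rmulK.
  - exact: rmulKV.
  - exact: (@tw_inG d F F' c t fa Htc Hfa HF HtF HFF).
rewrite hm_fix //; by rewrite /vroot /rm /= last_rev.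
Qed.

Fixpoint alt (d : nat) (c e : 'I_d) (n : nat) : seq 'I_d :=
  if n is n'.+1 then c :: e :: alt c e n' else [::].

Lemma alt_add (d : nat) (c e : 'I_d) i j : alt c e (i + j) = alt c e i ++ alt c e j.
Proof. by elim: i => [|i IH] //=; rewrite IH. Qed.

Lemma alt_snoc (d : nat) (c e : 'I_d) n : alt c e n.+1 = alt c e n ++ [:: c; e].
Proof. by rewrite -addn1 alt_add. Qed.

Lemma alt_rev (d : nat) (c e : 'I_d) n : rev (alt c e n) = alt e c n.
Proof.
elim: n => [|n IH] //.
rewrite [alt c e _]/= rev_cons rev_cons IH -cats1 -cats1 -catA alt_snoc //.
Qed.

Lemma alt_last (d : nat) (c e : 'I_d) n x : last x (alt c e n.+1) = e.
Proof. elim: n x => [|n IH] x //; rewrite [alt _ _ _]/= [last _ _]/=; exact: IH. Qed.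

Lemma alt_size (d : nat) (c e : 'I_d) n : size (alt c e n) = n.*2.
Proof. by elim: n => [|n IH] //=; rewrite IH doubleS. Qed.

Lemma alt_sorted (d : nat) (c e a : 'I_d) p n :
  c != e -> e != a -> sorted (@neqr d) (a :: p) -> sorted (@neqr d) (alt c e n ++ a :: p).
Proof.
move=> Hce Hea Hs; elim: n => [|n IH] //.
rewrite [alt _ _ _]/= cat_cons cat_cons /= {1}/neqr Hce /=.
case: n IH => [|n] IH /=; first by rewrite {1}/neqr Hea.
move: IH => /= ->; by rewrite andbT {1}/neqr eq_sym.
Qed.

Lemma step_cons (d : nat) (x : 'I_d) s : sorted (@neqr d) (x :: s) -> step_seq s x = x :: s.
Proof.
case: s => [|y s] //= /andP[H _]; rewrite /neqr in H.
by rewrite eq_sym (negbTE H).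
Qed.

Lemma rm_cons (d : nat) (X s : seq 'I_d) m : rm X (m :: s) = step_seq (rm X s) m.
Proof. by []. Qed.

Lemma C1 (d : nat) (u : seq 'I_d) m : rm (rev u) (m :: u) = [:: m].
Proof. by rewrite rm_cons -[rev u]cats0 rm_cancel. Qed.

Lemma C2 (d : nat) (c e a m : 'I_d) p n N : (n < N)%N ->
  last c (rm (rev (alt c e N.+1 ++ a :: p)) (m :: alt c e n.+1 ++ a :: p)) = c.
Proof.
move=> HnN.
have EN : N.+1 = n.+1 + (N - n) by rewrite addSn subnKC // ltnW.
have [k Hk] : exists k, N - n = k.+1.
  by case: (N - n) (subn_gt0 n N) HnN => [|k]; [move=> <- | exists k].
rewrite rm_cons rev_cat alt_rev EN alt_add -alt_rev rm_cat rm_cancel rm_cancel Hk.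
rewrite step_last2; first exact: alt_last.
by rewrite alt_size doubleS.
Qed.

Lemma bseq_last (d : nat) (c e a b : 'I_d) p z n : b != a -> sorted (@neqr d) (rcons z b) ->
  last c (rm (rev (alt c e n.+1 ++ a :: p)) (z ++ b :: p)) = c.
Proof.
move=> Hba Hz.
rewrite rev_cat rev_cons -cats1 -catA alt_rev rm_cat rm_cons rm_cancel /=.
rewrite eq_sym (negbTE Hba) rm_nocancel // last_cat /=.
by case: n => [|n] //; rewrite alt_last.
Qed.

Lemma subtree (d : nat) (k : vertex d -> vertex d) (a b : 'I_d) (p : seq 'I_d) :
  injective k -> (forall u w, adj u w -> adj (k u) (k w)) ->
  (forall v, val v = p -> k v = v) ->
  (forall v, val v = a :: p -> val (k v) = b :: p) ->
  forall n z v, size z = n -> val v = z ++ a :: p -> exists z', val (k v) = z' ++ b :: p.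
Proof.
move=> Hinj Hadj Hp Hw; elim=> [|n IH] z v.
  case: z => // _ Hv; exists [::]; exact: Hw.
case: z => [|x z0] // [Hz] Hv.
have Hs : sorted (@neqr d) (x :: z0 ++ a :: p) by move: (valP v); rewrite Hv.
pose v' : vertex d := exist _ (z0 ++ a :: p) (path_sorted Hs).
have Ev : v = step v' x by apply: vinj; rewrite /= step_cons // Hv.
have [y Hy] : adj (k v') (k v) by apply: Hadj; exists x.
have [z1 Hz1] := IH z0 v' Hz erefl.
move: Hy; rewrite -[k v]/(k v) => Hy.
have Hkv : val (k v) = step_seq (val (k v')) y by rewrite Hy.
rewrite Hz1 in Hkv.
case: z1 Hz1 Hkv => [|x1 z2] Hz1 /=.
  case: eqP => [_ Hkv|_ Hkv]; last by exists [:: y].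
  have := Hp (k v) Hkv => /Hinj Hkk.
  have E2 : val v = p by rewrite -Hkv Hkk.
  move: E2; rewrite Hv => /(congr1 size) /= /eqP; rewrite size_cat /=.
  move=> /eqP H; exfalso; lia.
case: eqP => _ Hkv; first by exists z2.
by exists [:: y, x1 & z2].
Qed.

Lemma minimal_moved (d : nat) (k : vertex d -> vertex d) :
  (exists x, k x <> x) ->
  exists w, k w <> w /\ forall y, (size (val y) < size (val w))%N -> k y = y.
Proof.
case=> x Hx.
suff : forall n x, (size (val x) <= n)%N -> k x <> x ->
   exists w, k w <> w /\ forall y, (size (val y) < size (val w))%N -> k y = y.
  by move=> H; exact: (H _ x (leqnn _) Hx).
elim=> [|n IH] x0 Hn Hx0.
  exists x0; split=> [//|y Hy]; exfalso; have := leq_trans Hy Hn; lia.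
case: (classic (forall y, (size (val y) < size (val x0))%N -> k y = y)) => H.
  by exists x0.
case: (not_all_ex_not _ _ H) => y Hy.
have [Hy1 Hy2] := imply_to_and _ _ Hy.
apply: (IH y) => //; by rewrite -ltnS (leq_trans Hy1 Hn).
Qed.

Lemma vshape (d : nat) (k : vertex d -> vertex d) (w : vertex d) :
  injective k -> (forall u w, adj u w -> adj (k u) (k w)) -> k (vroot d) = vroot d ->
  k w <> w -> (forall y, (size (val y) < size (val w))%N -> k y = y) ->
  exists a b p, [/\ val w = a :: p, val (k w) = b :: p, b != a &
     forall v, val v = p -> k v = v].
Proof.
move=> Hinj Hadj Hk0 Hw Hmin.
case Ew: (val w) => [|a p].
  by move: Ew => /vnil Ew; rewrite Ew in Hw.
have Hfix : forall v, val v = p -> k v = v.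
  by move=> v Hv; apply: Hmin; rewrite Hv Ew.
have Hs : sorted (@neqr d) (a :: p) by rewrite -Ew; exact: valP.
pose pv : vertex d := exist _ p (path_sorted Hs).
have Ew' : w = step pv a by apply: vinj; rewrite /= step_cons // Ew.
have [y Hy] : adj (k pv) (k w) by apply: Hadj; exists a.
rewrite (Hfix pv erefl) in Hy.
have Hkw : val (k w) = step_seq p y by rewrite Hy.
case: p Ew Hfix Hs pv Ew' Hy Hkw => [|q r] Ew Hfix Hs pv Ew' Hy Hkw.
  exists a, y, [::]; split => //.
  by apply: contra_notN Hw => /eqP Hya; apply: vinj; apply: (etrans Hkw); apply: esym; apply: (etrans Ew); rewrite /= Hya.
move: Hkw => /=; case: eqP => [Hqy|Hqy] Hkw.
  exfalso; apply: Hw; apply: Hinj; apply: Hmin; change (size (sval (k w)) < size (sval w))%N; rewrite Hkw Ew /=; lia.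
exists a, y, (q :: r); split => //.
by apply: contra_notN Hw => /eqP Hya; apply: vinj; apply: (etrans Hkw); apply: esym; apply: (etrans Ew); rewrite /= Hya.
Qed.

Lemma exists_t (d : nat) (F F' : {group {perm 'I_d}}) (c : 'I_d) :
  F \proper F' ->
  (forall (f : {perm 'I_d}) (x : 'I_d), f \in F' -> f x \in orbit 'P F x) ->
  exists t : {perm 'I_d}, [/\ t \in F', t c = c & exists m, t m != m].
Proof.
move=> /properP [HFF [f Hf' HfF]] Horb.
have := Horb f c Hf'; rewrite orbitE => /imsetP [g Hg Hgc].
have HgF' : g \in F' by exact: (subsetP HFF).
exists (f * g^-1)%g; split.
- by rewrite groupM // groupV.
- by rewrite permM Hgc /= permK.
case: (pickP (fun m => (f * g^-1)%g m != m)) => [m Hm | H]; first by exists m.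
exfalso; move: HfF; apply/negP/negPn.
have E : (f * g^-1)%g = 1%g by apply/permP => x; rewrite perm1; apply/eqP; move: (H x) => /= /negbFE.
have -> : f = g by rewrite -(mulgKV g f) E mul1g.
done.
Qed.

Definition mkfa (d : nat) (F : {set {perm 'I_d}}) (t : {perm 'I_d}) (c x : 'I_d) : {perm 'I_d} :=
  if x == c then 1%g else odflt 1%g [pick g in F | g x == t x].

Lemma mkfa_spec (d : nat) (F F' : {group {perm 'I_d}}) (t : {perm 'I_d}) (c : 'I_d) :
  t \in F' -> t c = c ->
  (forall (f : {perm 'I_d}) (x : 'I_d), f \in F' -> f x \in orbit 'P F x) ->
  [/\ forall x, mkfa F t c x x = t x, forall x, mkfa F t c x \in F & mkfa F t c c = 1%g].
Proof.
move=> HtF Htc Horb; split.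
- move=> x; rewrite /mkfa; case: eqP => [->|_]; first by rewrite perm1 Htc.
  case: pickP => [g /andP [_ /eqP]|H] //=.
  have := Horb t x HtF; rewrite orbitE => /imsetP [g Hg Hgx].
  by move: (H g); rewrite Hg /= Hgx eqxx.
- move=> x; rewrite /mkfa; case: eqP => _; first exact: group1.
  by case: pickP => [g /andP [] | _] //=; rewrite group1.
- by rewrite /mkfa eqxx.
Qed.

Lemma pigeon (N : nat) (P : nat -> nat -> Prop) :
  (forall n, exists i, (i < N)%N /\ P n i) ->
  exists n1 n2 i, (n1 < n2)%N /\ P n1 i /\ P n2 i.
Proof.
move=> H.
pose f (n : 'I_N.+1) : 'I_N :=
  Ordinal (proj1 (proj2_sig (constructive_indefinite_description _ (H n)))).
have Pf : forall n : 'I_N.+1, P n (f n).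
  move=> n; rewrite /f /=; exact: (proj2 (proj2_sig (constructive_indefinite_description _ (H n)))).
have : ~~ injectiveb f.
  apply/negP => /injectiveP Hinj; have := leq_card f Hinj; by rewrite !card_ord ltnn.
case/injectivePn => x [y Hxy Hf].
case: (ltngtP x y) => Hl.
- exists x, y, (f x); split => //; split; first exact: Pf; rewrite Hf; exact: Pf.
- exists y, x, (f x); split => //; split; last exact: Pf; rewrite Hf; exact: Pf.
- by move: Hxy; rewrite (val_inj Hl) eqxx.
Qed.

Lemma main_root (d : nat) (F F' : {set {perm 'I_d}}) (c m : 'I_d) (t : {perm 'I_d})
  (fa : 'I_d -> {perm 'I_d}) :
  (3 <= d)%N -> t c = c -> (forall x, fa x x = t x) -> (forall x, fa x \in F) -> t \in F' ->
  F \subset F' -> fa c = 1%g -> t m != m -> ICC (in_K F F' (vroot d)).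
Proof.
move=> Hd Htc Hfa HF HtF HFF Hfc Hm k [[[Hbij Hadj] HG2 HG3] Hk0] Hmov.
have Hinj : injective k := bij_inj Hbij.
have Hadj' : forall u w, adj u w -> adj (k u) (k w) by move=> u w /(Hadj u w).
have [w [Hw Hmin]] := minimal_moved Hmov.
have [a [b [p [Ew Ekw Hba Hp]]]] := vshape Hinj Hadj' Hk0 Hw Hmin.
have [e /andP [Hec Hea]] : exists e, (e != c) && (e != a).
  case: (pickP (fun e => (e != c) && (e != a))) => [e He|H]; first by exists e.
  exfalso.
  have : [set: 'I_d] \subset [set c; a].
    apply/subsetP => x _; move: (H x) => /=; rewrite !inE.
    by case: eqP; case: eqP.
  move=> /subset_leq_card; rewrite cardsT card_ord cards2.
  by case: (c != a) => /= /(leq_trans Hd).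
have Hmc : m != c by apply: contraNneq Hm => ->; rewrite Htc.
have Hws : sorted (@neqr d) (a :: p) by move: (valP w); rewrite Ew.
have Hce : c != e by rewrite eq_sym.
pose un n := alt c e n.+1 ++ a :: p.
have Hun : forall n, sorted (@neqr d) (un n) := fun n => alt_sorted n.+1 Hce Hea Hws.
have Hxs : forall n, sorted (@neqr d) (m :: un n).
  move=> n; move: (Hun n); rewrite /un /= => ->; rewrite andbT; exact: Hmc.
pose unv n : vertex d := exist _ (un n) (Hun n).
pose xv n : vertex d := exist _ (m :: un n) (Hxs n).
pose h n := hm c fa (unv n).
pose hi n := hmi c t fa (unv n).
pose g n := fun y => h n (k (hi n y)).
have F1 : forall n, h n (xv n) <> xv n.
  move=> n /(congr1 val).
  change (rm (un n) (tw0 c fa (rm (rev (un n)) (m :: un n))) = m :: un n -> False).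
  rewrite C1 /tw0 /= Hfa /fstep /un /=.
  have Htmc : (c == t m) = false.
    apply/negbTE; apply: contraNneq Hmc => Hc.
    by rewrite -(perm_inj (etrans Htc Hc)).
  rewrite Htmc => -[] /eqP; by rewrite (negbTE Hm).
have F2 : forall n N, (n < N)%N -> h N (xv n) = xv n.
  move=> n N HnN; apply: hm_fix => //; exact: C2.
have Hw' : forall v, val v = a :: p -> val (k v) = b :: p.
  move=> v Hv; have -> : v = w by apply: vinj; rewrite Hv Ew.
  exact: Ekw.
have F3 : forall n, exists z', val (k (xv n)) = z' ++ b :: p.
  move=> n; exact: (@subtree d k a b p Hinj Hadj' Hp Hw' _ (m :: alt c e n.+1) (xv n) erefl erefl).
have F4 : forall n N, h N (k (xv n)) = k (xv n).
  move=> n N; have [z' Hz'] := F3 n.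
  apply: hm_fix => //; rewrite Hz'.
  change (last c (rm (rev (alt c e N.+1 ++ a :: p)) (z' ++ b :: p)) = c); apply: (@bseq_last d c e a b p z' N Hba).
  have := valP (k (xv n)); rewrite Hz' -cat_rcons; exact: sorted_catl.
have Hconj : forall n, conj_of (in_K F F' (vroot d)) k (g n).
  move=> n; exists (h n); split.
    exact: (@hm_inK d F F' c t fa (unv n) Htc Hfa HF HtF HFF Hfc erefl).
  by move=> y; rewrite /g /h /hi hmK.
case=> l Hl.
have [n [N [i [HnN [Hg1 Hg2]]]]] :=
  @pigeon (size l) (fun n i => forall y, g n y = nth id l i y) (fun n => Hl (g n) (Hconj n)).
have Hgg : forall y, g n y = g N y by move=> y; rewrite Hg1 Hg2.
have ginj : injective (g N).
  move=> y1 y2 /(can_inj (hmK (unv N) Htc Hfa)) /Hinj.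
  exact: (can_inj (hmKV (unv N) Htc Hfa)).
have K : forall n x, hi n (h n x) = x by move=> n0 x; exact: (hmK (unv n0) Htc Hfa x).
have Eg : forall n x, g n (h n x) = h n (k x) by move=> n0 x; rewrite /g K.
apply: (F1 n); apply: ginj.
rewrite -Hgg Eg F4.
by rewrite -[X in _ = g N X](F2 n N HnN) Eg F4.
Qed.

Lemma ICC_transfer (d : nat) (F F' : {set {perm 'I_d}}) (v0 : vertex d) :
  ICC (in_K F F' (vroot d)) -> ICC (in_K F F' v0).
Proof.
move=> Hroot k [HGk Hk0] [x Hx] [l Hl].
pose r := rmul v0; pose ri := rmul (revv v0).
have Kr : cancel r ri := rmulK v0.
have Kri : cancel ri r := rmulKV v0.
have Hr0 : r (vroot d) = v0 by apply: vinj.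
have Hri0 : ri v0 = vroot d by rewrite -Hr0 Kr.
pose k' := fun y => ri (k (r y)).
have Hk' : in_K F F' (vroot d) k'.
  split; first exact: (conjG (rmul_cp _) (rmul_cp _) Kri Kr HGk).
  by rewrite /k' Hr0 Hk0 Hri0.
have Hmov' : exists y, k' y <> y.
  exists (ri x); rewrite /k' Kri => /(can_inj Kri); exact: Hx.
apply: (Hroot k' Hk' Hmov').
exists (map (fun g y => ri (g (r y))) l) => g' [h' [Hh' Hc']].
pose h := fun y => r (h' (ri y)).
have Hh : in_K F F' v0 h.
  split; first exact: (conjG (rmul_cp _) (rmul_cp _) Kr Kri (proj1 Hh')).
  by rewrite /h Hri0 (proj2 Hh') Hr0.
pose g := fun y => r (g' (ri y)).
have Hconj : conj_of (in_K F F' v0) k g.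
  exists h; split => // y; by rewrite /g /h Kr Hc' /k' Kri.
have [i [Hi Hgi]] := Hl g Hconj.
exists i; split; first by rewrite size_map.
move=> y; rewrite (nth_map id) // -Hgi /g.
by rewrite Kr Kr.
Qed.

Theorem proposition3 (d : nat) (F F' : {group {perm 'I_d}}) (v0 : vertex d) :
  (3 <= d)%N ->
  F \proper F' ->
  (forall (f : {perm 'I_d}) (x : 'I_d), f \in F' -> f x \in orbit 'P F x) ->
  ICC (in_K F F' v0).
Proof.
move=> Hd Hprop Horb; apply: ICC_transfer.
have H0 : (0 < d)%N by apply: leq_trans Hd.
pose c : 'I_d := Ordinal H0.
have [t [HtF Htc [m Hm]]] := exists_t c Hprop Horb.
have [Hfa HfaF Hfc] := mkfa_spec HtF Htc Horb.
exact: (main_root Hd Htc Hfa HfaF HtF (proper_sub Hprop) Hfc Hm).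
Qed.
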